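(* For all $j\in\mathbb{Z}_n$ the element $c_j:=b_kb_{j-k}+b_{j-k}b_k$ is independent of $k\in\mathbb{Z}_n$ and central in $A$. Moreover, for each $r\geq 0$, the set $$\mathcal{B}_r=\{\,b_0^{i_0}b_1^{i_1}\cdots b_{n-1}^{i_{n-1}}\,c_0^{j_0}c_1^{j_1}\cdots c_{n-1}^{j_{n-1}}\ \mid\ (i_0,\dots,i_{n-1})\in\{0,1\}^n,\ (j_0,\dots,j_{n-1})\in\mathbb{N}^n,\ \textstyle\sum_s i_s+2\sum_s j_s=r\,\}$$ is a $\Bbbk$-linear basis of the degree-$r$ component $A_r$ of $A$.
   Context: $\Bbbk$ is an algebraically closed field of characteristic zero, $n\ge 2$, $A=\Bbbk_{-1}[x_0,\dots,x_{n-1}]$ is generated by degree-one $x_0,\dots,x_{n-1}$ with $x_ix_j=-x_jx_i$ ($i\ne j$). Let $\omega$ be a primitive $n$th root of unity and $b_\gamma=\frac1n\sum_{i=0}^{n-1}\omega^{i\gamma}x_i$ for $\gamma\in\mathbb{Z}_n$ (indices modulo $n$). *)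

(* Defs.v *)
From HB Require Import structures.
From mathcomp Require Import all_boot all_order all_algebra.
Set Implicit Arguments. Unset Strict Implicit. Unset Printing Implicit Defensive.
Import Order.TTheory GRing.Theory Num.Theory.
Local Open Scope ring_scope.

(* Model of A = k_{-1}[x_0,...,x_{n-1}]:
   an element is given by its coefficient function on exponent vectors
   a : 'I_n -> nat, where the exponent vector a stands for the ordered
   monomial x^a = x_0^{a_0} x_1^{a_1} ... x_{n-1}^{a_{n-1}}.
   The relations x_i x_j = - x_j x_i (i <> j) give
   x^d x^e = (-1)^(sum_{i > j} d_i e_j) x^(d+e). *)

Definition mono (n : nat) := {ffun 'I_n -> nat}.
Definition ser (K : fieldType) (n : nat) := mono n -> K.

Definition deg n (a : mono n) : nat := (\sum_(i < n) a i)%N.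

Definition sgn_exp n (d e : mono n) : nat :=
  (\sum_(i < n) \sum_(j < n | (j < i)%N) d i * e j)%N.

Definition ord_to_mono n m (d : {ffun 'I_n -> 'I_m}) : mono n :=
  [ffun i => nat_of_ord (d i)].

Definition mono_sub n (a d : mono n) : mono n := [ffun i => (a i - d i)%N].

Definition smul (K : fieldType) n (f g : ser K n) : ser K n := fun a =>
  \sum_(d : {ffun 'I_n -> 'I_(deg a).+1} | [forall i, (d i <= a i)%N])
     (-1) ^+ (sgn_exp (ord_to_mono d) (mono_sub a (ord_to_mono d)))
       * f (ord_to_mono d) * g (mono_sub a (ord_to_mono d)).

Definition sadd (K : fieldType) n (f g : ser K n) : ser K n := fun a => f a + g a.
Definition sone (K : fieldType) n : ser K n :=
  fun a => if a == [ffun => 0%N] then 1 else 0.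
Definition spow (K : fieldType) n (f : ser K n) (k : nat) : ser K n :=
  iter k (smul f) (@sone K n).

Definition xgen (K : fieldType) n (i : 'I_n) : ser K n :=
  fun a => if a == [ffun j => nat_of_bool (j == i)] then 1 else 0.

(* elements of A: finitely supported (equivalently degree-bounded) *)
Definition is_elt (K : fieldType) n (f : ser K n) : Prop :=
  exists N : nat, forall a : mono n, (N < deg a)%N -> f a = 0.

Definition homog (K : fieldType) n (r : nat) (f : ser K n) : Prop :=
  forall a : mono n, deg a != r -> f a = 0.

Definition bel (K : fieldType) n (w : K) (g : 'I_n) : ser K n :=
  fun a => (n%:R)^-1 * \sum_(i < n) w ^+ (i * g) * @xgen K n i a.

Definition zsub n (j k : 'I_n) : 'I_n := Ordinal (ltn_pmod ((j + n - k)%N) (leq_ltn_trans (leq0n j) (ltn_ord j))).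

Definition cel (K : fieldType) n (w : K) (j k : 'I_n) : ser K n :=
  sadd (smul (bel w k) (bel w (zsub j k))) (smul (bel w (zsub j k)) (bel w k)).

(* the element c_j (using the representative k = j, i.e. b_j b_0 + b_0 b_j;
   the theorem shows the choice of k is irrelevant) *)
Definition cj (K : fieldType) n (w : K) (j : 'I_n) : ser K n := cel w j j.

Definition oprod (K : fieldType) n (f : 'I_n -> ser K n) (e : 'I_n -> nat) : ser K n :=
  foldr (fun s acc => smul (spow (f s) (e s)) acc) (@sone K n) (enum 'I_n).

(* indices of B_r: (i, j) with i in {0,1}^n, j in N^n (bounded by r,
   which loses nothing since 2 sum j = r - sum i <= r) *)
Definition bidx n r := ({ffun 'I_n -> bool} * {ffun 'I_n -> 'I_r.+1})%type.

Definition bvalid n r (t : bidx n r) : bool :=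
  ((\sum_(s < n) nat_of_bool (t.1 s)) + 2 * \sum_(s < n) nat_of_ord (t.2 s) == r)%N.

Definition belt (K : fieldType) n (w : K) r (t : bidx n r) : ser K n :=
  smul (oprod (bel w) (fun s => nat_of_bool (t.1 s)))
       (oprod (cj w) (fun s => nat_of_ord (t.2 s))).

(* Main.v *)
Require Import Defs.
From HB Require Import structures.
From mathcomp Require Import all_boot all_order all_algebra.
From mathcomp Require Import boolp.
From Stdlib Require Import FunctionalExtensionality.
Set Implicit Arguments. Unset Strict Implicit. Unset Printing Implicit Defensive.
Import Order.TTheory GRing.Theory Num.Theory.
Local Open Scope ring_scope.

Section Mono.
Variable n : nat.
Implicit Types (a d e m : mono n).

Definition mle d a := [forall i, (d i <= a i)%N].
Definition madd d e : mono n := [ffun i => (d i + e i)%N].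
Definition mzero : mono n := [ffun => 0%N].

Lemma mleP d a : reflect (forall i, (d i <= a i)%N) (mle d a).
Proof. exact: forallP. Qed.

Lemma le_deg a i : (a i <= deg a)%N.
Proof. by rewrite /deg (bigD1 i) //= leq_addr. Qed.

Lemma otm_inj N : injective (@ord_to_mono n N).
Proof.
move=> d d' e; apply/ffunP => i; apply: val_inj.
by have := congr1 (fun f : mono n => f i) e; rewrite !ffunE.
Qed.

Lemma otmE N (d : {ffun 'I_n -> 'I_N}) i : ord_to_mono d i = d i.
Proof. by rewrite ffunE. Qed.

Lemma mle_otm N (d : {ffun 'I_n -> 'I_N}) a :
  [forall i, (d i <= a i)%N] = mle (ord_to_mono d) a.
Proof. by apply: eq_forallb => i; rewrite otmE. Qed.

Lemma mle_trans d b a : mle d b -> mle b a -> mle d a.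
Proof. by move=> /mleP h1 /mleP h2; apply/mleP => i; exact: leq_trans (h1 i) (h2 i). Qed.

Lemma mle_sub a d : mle (mono_sub a d) a.
Proof. by apply/mleP => i; rewrite ffunE leq_subr. Qed.

Lemma sum_single (V : zmodType) N a m (F : mono n -> V) :
  (forall i, a i <= N)%N ->
  (forall d, mle d a -> d != m -> F d = 0) ->
  \sum_(d : {ffun 'I_n -> 'I_N.+1} | [forall i, (d i <= a i)%N]) F (ord_to_mono d)
  = if mle m a then F m else 0.
Proof.
move=> hN hF; case: ifP => ma.
  pose d0 : {ffun 'I_n -> 'I_N.+1} := [ffun i => inord (m i)].
  have hd0 : ord_to_mono d0 = m.
    apply/ffunP => i; rewrite !ffunE inordK // ltnS.
    exact: leq_trans (mleP _ _ ma i) (hN i).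
  rewrite (bigD1 d0) /=; last by rewrite mle_otm hd0.
  rewrite big1 ?addr0 ?hd0 // => d /andP [hd hne]; apply: hF; first by rewrite -mle_otm.
  by apply: contra hne => /eqP e; apply/eqP; apply: otm_inj; rewrite e hd0.
rewrite big1 // => d hd; apply: hF; first by rewrite -mle_otm.
by apply/eqP => e; move: hd; rewrite mle_otm e ma.
Qed.

Lemma sgn_exp_addl d e f : sgn_exp (madd d e) f = (sgn_exp d f + sgn_exp e f)%N.
Proof.
rewrite /sgn_exp -big_split; apply: eq_bigr => i _ /=.
by rewrite -big_split; apply: eq_bigr => j _ /=; rewrite ffunE mulnDl.
Qed.

Lemma sgn_exp_addr d e f : sgn_exp d (madd e f) = (sgn_exp d e + sgn_exp d f)%N.
Proof.
rewrite /sgn_exp -big_split; apply: eq_bigr => i _ /=.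
by rewrite -big_split; apply: eq_bigr => j _ /=; rewrite ffunE mulnDr.
Qed.

Lemma sgn_exp0l e : sgn_exp mzero e = 0%N.
Proof. by rewrite /sgn_exp big1 // => i _; rewrite big1 // => j _; rewrite ffunE. Qed.

Lemma sgn_exp0r e : sgn_exp e mzero = 0%N.
Proof. by rewrite /sgn_exp big1 // => i _; rewrite big1 // => j _; rewrite ffunE muln0. Qed.

Lemma maddC d e : madd d e = madd e d.
Proof. by apply/ffunP => i; rewrite !ffunE addnC. Qed.

Lemma maddA d e f : madd d (madd e f) = madd (madd d e) f.
Proof. by apply/ffunP => i; rewrite !ffunE addnA. Qed.

Lemma madd_sub a d : mle d a -> madd d (mono_sub a d) = a.
Proof. by move=> /mleP h; apply/ffunP => i; rewrite !ffunE subnKC. Qed.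

Lemma sub_madd d e : mono_sub (madd d e) d = e.
Proof. by apply/ffunP => i; rewrite !ffunE addKn. Qed.

Lemma mle_madd d e : mle d (madd d e).
Proof. by apply/mleP => i; rewrite ffunE leq_addr. Qed.

Lemma sub_mzero a : mono_sub a mzero = a.
Proof. by apply/ffunP => i; rewrite !ffunE subn0. Qed.

Lemma mle0 a : mle mzero a.
Proof. by apply/mleP => i; rewrite ffunE. Qed.

Lemma deg_madd d e : deg (madd d e) = (deg d + deg e)%N.
Proof. by rewrite /deg -big_split; apply: eq_bigr => i _; rewrite ffunE. Qed.

End Mono.

Section Ser.
Variables (K : fieldType) (n : nat).
Local Notation ser := (ser K n).
Local Notation mono := (mono n).
Implicit Types (f g h : ser) (a d e m p q r : mono).

Definition delta m : ser := fun a => if a == m then 1 else 0.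

Definition term f g a x := (-1) ^+ sgn_exp x (mono_sub a x) * f x * g (mono_sub a x).

Lemma smulE f g a : smul f g a =
  \sum_(d : {ffun 'I_n -> 'I_(deg a).+1} | [forall i, (d i <= a i)%N]) term f g a (ord_to_mono d).
Proof. by []. Qed.

Lemma smul_deltal m g a : smul (delta m) g a =
  if mle m a then (-1) ^+ sgn_exp m (mono_sub a m) * g (mono_sub a m) else 0.
Proof.
rewrite smulE (sum_single (m := m)); first by rewrite /term /delta eqxx mulr1.
  exact: le_deg.
by move=> d _ hd; rewrite /term /delta (negbTE hd) mulr0 mul0r.
Qed.

Lemma smul_deltar f m a : smul f (delta m) a =
  if mle m a then (-1) ^+ sgn_exp (mono_sub a m) m * f (mono_sub a m) else 0.
Proof.
case: ifP => ma.
  rewrite smulE (sum_single (m := mono_sub a m)); last 2 first.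
  - exact: le_deg.
  - move=> d hd hne; rewrite /term /delta; case: eqP => [e|]; last by rewrite !mulr0.
    by case/eqP: hne; rewrite -e; apply/ffunP => i; rewrite !ffunE subKn // (mleP _ _ hd).
  rewrite mle_sub /term /delta.
  have -> : mono_sub a (mono_sub a m) = m.
    by apply/ffunP => i; rewrite !ffunE subKn // (mleP _ _ ma).
  by rewrite eqxx mulr1.
rewrite smulE big1 // => d hd; rewrite /term /delta; case: eqP => [e|]; last by rewrite !mulr0.
by move: ma; rewrite -e mle_sub.
Qed.

Lemma delta_mul p q : smul (delta p) (delta q) =
  (fun a => (-1) ^+ sgn_exp p q * delta (madd p q) a).
Proof.
apply: functional_extensionality => a; rewrite smul_deltal /delta.
case: ifP => pa.
  have [e|ne] := eqVneq (mono_sub a p) q.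
    by rewrite -e madd_sub // eqxx mulr1.
  have [e|] := eqVneq a (madd p q); last by rewrite !mulr0.
  by case/eqP: ne; rewrite e sub_madd.
have [e|] := eqVneq a (madd p q); last by rewrite !mulr0.
by move: pa; rewrite e mle_madd.
Qed.

Lemma smul_local f f' g g' a :
  (forall d, mle d a -> f d = f' d) -> (forall d, mle d a -> g d = g' d) ->
  smul f g a = smul f' g' a.
Proof.
move=> hf hg; rewrite !smulE; apply: eq_bigr => d hd.
by rewrite /term hf ?hg ?mle_sub // -mle_otm.
Qed.

Lemma smul_scalel c f g : smul (fun x => c * f x) g = (fun a => c * smul f g a).
Proof.
apply: functional_extensionality => a; rewrite !smulE mulr_sumr; apply: eq_bigr => d _.
by rewrite /term !mulrA [_ * c]mulrC.
Qed.

Lemma smul_scaler c f g : smul f (fun x => c * g x) = (fun a => c * smul f g a).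
Proof.
apply: functional_extensionality => a; rewrite !smulE mulr_sumr; apply: eq_bigr => d _.
by rewrite /term mulrA [_ * c]mulrC !mulrA.
Qed.

Definition lc (c : mono -> K) (F : mono -> ser) (a : mono) : ser := fun x =>
  \sum_(d : {ffun 'I_n -> 'I_(deg a).+1} | [forall i, (d i <= a i)%N])
     c (ord_to_mono d) * F (ord_to_mono d) x.

Lemma smul_lcl c F a g : smul (lc c F a) g = lc c (fun p => smul (F p) g) a.
Proof.
apply: functional_extensionality => b; rewrite /lc smulE.
under eq_bigr do rewrite /term mulr_sumr mulr_suml.
rewrite exchange_big; apply: eq_bigr => d _; rewrite smulE mulr_sumr.
by apply: eq_bigr => e _; rewrite /term mulrCA !mulrA.
Qed.

Lemma smul_lcr c F a g : smul g (lc c F a) = lc c (fun p => smul g (F p)) a.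
Proof.
apply: functional_extensionality => b; rewrite /lc smulE.
under eq_bigr do rewrite /term mulr_sumr.
rewrite exchange_big; apply: eq_bigr => d _; rewrite smulE mulr_sumr.
by apply: eq_bigr => e _; rewrite /term mulrCA !mulrA.
Qed.

Lemma lc_delta f a m : mle m a -> lc f delta a m = f m.
Proof.
move=> ma; rewrite /lc (sum_single (m := m) (F := fun y => f y * delta y m)) ?ma /delta ?eqxx ?mulr1 //.
  exact: le_deg.
by move=> d _ hd; rewrite eq_sym (negbTE hd) mulr0.
Qed.

Lemma lc_ext c F F' a : (forall p, F p = F' p) -> lc c F a = lc c F' a.
Proof. by move=> h; rewrite (functional_extensionality _ _ h). Qed.

Lemma smul_assoc_delta p q r :
  smul (smul (delta p) (delta q)) (delta r) = smul (delta p) (smul (delta q) (delta r)).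
Proof.
rewrite !delta_mul (smul_scalel _ (delta (madd p q))) (smul_scaler _ _ (delta (madd q r))) !delta_mul.
apply: functional_extensionality => a; rewrite !mulrA -!exprD.
rewrite maddA sgn_exp_addl sgn_exp_addr.
by rewrite addnA [in RHS]addnC.
Qed.

Lemma smulA f g h : smul (smul f g) h =1 smul f (smul g h).
Proof.
move=> a.
have tr : forall k, forall d, mle d a -> k d = lc k delta a d.
  by move=> k d hd; rewrite lc_delta.
rewrite (@smul_local (smul f g) (smul (lc f delta a) (lc g delta a)) h (lc h delta a)); last 2 first.
- move=> d hd; apply: smul_local => e he; apply: tr; exact: mle_trans he hd.
- exact: tr.
rewrite (@smul_local f (lc f delta a) (smul g h) (smul (lc g delta a) (lc h delta a))); last 2 first.
- exact: tr.
- move=> d hd; apply: smul_local => e he; apply: tr; exact: mle_trans he hd.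
have L : smul (smul (lc f delta a) (lc g delta a)) (lc h delta a) =
   lc f (fun p => lc g (fun q => lc h (fun r => smul (smul (delta p) (delta q)) (delta r)) a) a) a.
  rewrite smul_lcl smul_lcl; apply: lc_ext => p.
  rewrite (smul_lcr g delta a (delta p)) smul_lcl; apply: lc_ext => q; by rewrite smul_lcr.
have R : smul (lc f delta a) (smul (lc g delta a) (lc h delta a)) =
   lc f (fun p => lc g (fun q => lc h (fun r => smul (delta p) (smul (delta q) (delta r))) a) a) a.
  rewrite smul_lcl; apply: lc_ext => p.
  rewrite smul_lcl smul_lcr; apply: lc_ext => q; by rewrite smul_lcr smul_lcr.
rewrite L R; congr (_ a); apply: lc_ext => p; apply: lc_ext => q; apply: lc_ext => r.
exact: smul_assoc_delta.
Qed.

End Ser.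
Arguments delta {K n}.

Definition S (K : fieldType) (n : nat) := ser K n.
HB.instance Definition _ (K : fieldType) (n : nat) := Choice.copy (S K n) (mono n -> K).

Section Inst.
Variables (K : fieldType) (n : nat).
Local Notation S := (S K n).

Definition szero : S := fun _ => 0.
Definition sopp (f : S) : S := fun x => - f x.
Definition sadd' (f g : S) : S := sadd f g.

Lemma saddA : associative sadd'.
Proof. by move=> f g h; apply: functional_extensionality => x; rewrite /sadd' /sadd addrA. Qed.
Lemma saddC : commutative sadd'.
Proof. by move=> f g; apply: functional_extensionality => x; rewrite /sadd' /sadd addrC. Qed.
Lemma sadd0 : left_id szero sadd'.
Proof. by move=> f; apply: functional_extensionality => x; rewrite /sadd' /sadd add0r. Qed.
Lemma saddN : left_inverse szero sopp sadd'.
Proof. by move=> f; apply: functional_extensionality => x; rewrite /sadd' /sadd addNr. Qed.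

HB.instance Definition _ := GRing.isZmodule.Build S saddA saddC sadd0 saddN.

Lemma addE (f g : S) x : (f + g) x = f x + g x. Proof. by []. Qed.

Definition smul' (f g : S) : S := smul f g.
Definition sone' : S := @sone K n.

Lemma smulA' : associative smul'.
Proof. by move=> f g h; apply: functional_extensionality => x; rewrite /smul' smulA. Qed.

Lemma sone_delta : @sone K n = delta (mzero n).
Proof. by []. Qed.

Lemma smul1 : left_id sone' smul'.
Proof.
move=> f; apply: functional_extensionality => x.
by rewrite /smul' /sone' sone_delta smul_deltal mle0 sgn_exp0l sub_mzero mul1r.
Qed.

Lemma smulr1 : right_id sone' smul'.
Proof.
move=> f; apply: functional_extensionality => x.
by rewrite /smul' /sone' sone_delta smul_deltar mle0 sgn_exp0r sub_mzero mul1r.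
Qed.

Lemma smulDl : left_distributive smul' +%R.
Proof.
move=> f g h; apply: functional_extensionality => x.
rewrite /smul' addE !smulE -big_split; apply: eq_bigr => d _.
by rewrite /term addE mulrDr mulrDl.
Qed.

Lemma smulDr : right_distributive smul' +%R.
Proof.
move=> f g h; apply: functional_extensionality => x.
rewrite /smul' addE !smulE -big_split; apply: eq_bigr => d _.
by rewrite /term addE mulrDr.
Qed.

Lemma sone_neq0 : sone' != 0.
Proof.
apply/eqP => h; have := congr1 (fun f : S => f (mzero n)) h.
by rewrite /sone' /sone eqxx /=; apply/eqP; exact: oner_neq0.
Qed.

HB.instance Definition _ := GRing.Zmodule_isNzRing.Build S smulA' smul1 smulr1 smulDl smulDr sone_neq0.

Definition sscale (c : K) (f : S) : S := fun x => c * f x.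

Lemma sscaleA c d f : sscale c (sscale d f) = sscale (c * d) f.
Proof. by apply: functional_extensionality => x; rewrite /sscale mulrA. Qed.
Lemma sscale1 : left_id 1 sscale.
Proof. by move=> f; apply: functional_extensionality => x; rewrite /sscale mul1r. Qed.
Lemma sscaleDr : right_distributive sscale +%R.
Proof. by move=> c f g; apply: functional_extensionality => x; rewrite /sscale !addE mulrDr. Qed.
Lemma sscaleDl f : {morph sscale^~ f : a b / a + b}.
Proof. by move=> a b; apply: functional_extensionality => x; rewrite /sscale !addE mulrDl. Qed.

HB.instance Definition _ := GRing.Zmodule_isLmodule.Build K S sscaleA sscale1 sscaleDr sscaleDl.

Lemma sscaleAl (c : K) (u v : S) : c *: (u * v) = (c *: u) * v.
Proof.
apply: functional_extensionality => x.
by change (c * smul u v x = smul (sscale c u) v x); rewrite /sscale smul_scalel.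
Qed.

HB.instance Definition _ := GRing.Lmodule_isLalgebra.Build K S sscaleAl.

Lemma sscaleAr (c : K) (u v : S) : c *: (u * v) = u * (c *: v).
Proof.
apply: functional_extensionality => x.
by change (c * smul u v x = smul u (sscale c v) x); rewrite /sscale smul_scaler.
Qed.

HB.instance Definition _ := GRing.Lalgebra_isAlgebra.Build K S sscaleAr.

Lemma evD (f g : S) a : (f + g) a = f a + g a. Proof. by []. Qed.
Lemma evN (f : S) a : (- f) a = - f a. Proof. by []. Qed.
Lemma ev0 a : (0 : S) a = 0. Proof. by []. Qed.
Lemma evZ c (f : S) a : (c *: f) a = c * f a. Proof. by []. Qed.
Lemma evM (f g : S) a : (f * g) a = smul f g a. Proof. by []. Qed.
Lemma ev1 a : (1 : S) a = @sone K n a. Proof. by []. Qed.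
Lemma evsum (I : Type) (r : seq I) (P : pred I) (F : I -> S) a :
  (\sum_(i <- r | P i) F i) a = \sum_(i <- r | P i) F i a.
Proof. by apply: (big_morph (fun f : S => f a)) => //. Qed.

End Inst.


Lemma sign_double (K : fieldType) x : (-1) ^+ (x + x)%N = 1 :> K.
Proof.
elim: x => [|x IH]; first by rewrite expr0.
by rewrite addSn addnS !exprS !mulN1r opprK.
Qed.

Section Elts.
Variables (K : fieldType) (n : nat).
Local Notation S := (S K n).
Local Notation mono := (mono n).

Definition unitm (i : 'I_n) : mono := [ffun j => nat_of_bool (j == i)].
Definition X (i : 'I_n) : S := xgen K i.
Definition Y (i : 'I_n) : S := X i * X i.

Lemma XE i : X i = delta (unitm i).
Proof. by []. Qed.

Lemma sgn_unit i i' : sgn_exp (unitm i) (unitm i') = (i' < i)%N.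
Proof.
rewrite /sgn_exp (bigD1 i) //= [X in (_ + X)%N]big1 ?addn0; last first.
  by move=> u hu; rewrite big1 // => v _; rewrite ffunE (negbTE hu).
rewrite ffunE eqxx /= ?mul1n.
case: (ltnP i' i) => h.
  rewrite (bigD1 i') //= ffunE eqxx big1 ?addn0 // => v /andP [_ hv].
  by rewrite ffunE (negbTE hv).
by rewrite big1 // => v hv; rewrite ffunE; case: eqP => // e; move: hv; rewrite e ltnNge h.
Qed.

Lemma XX i i' : X i * X i' = (-1) ^+ (i' < i)%N *: (delta (madd (unitm i) (unitm i')) : S).
Proof.
apply: functional_extensionality => a.
by rewrite evM evZ !XE delta_mul sgn_unit.
Qed.

Lemma Xanti i i' : i != i' -> X i * X i' + X i' * X i = 0.
Proof.
move=> ne; rewrite !XX [madd (unitm i') _]maddC -scalerDl.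
case: (ltngtP i i') => h.
- by rewrite expr0 expr1 addrN scale0r.
- by rewrite expr0 expr1 addNr scale0r.
- by move: ne; rewrite (val_inj h) eqxx.
Qed.

Lemma YE i : Y i = delta (madd (unitm i) (unitm i)).
Proof. by rewrite /Y XX ltnn expr0 scale1r. Qed.

Lemma Y_central i (f : S) : Y i * f = f * Y i.
Proof.
apply: functional_extensionality => a.
rewrite !evM YE smul_deltal smul_deltar; case: ifP => // _.
by rewrite sgn_exp_addl sgn_exp_addr !sign_double.
Qed.

Variable w : K.
Hypothesis hw : n.-primitive_root w.

Definition b (g : 'I_n) : S := bel w g.

Lemma bE g : b g = (n%:R)^-1 *: \sum_(i < n) w ^+ (i * g) *: X i.
Proof.
apply: functional_extensionality => a.
by rewrite evZ evsum.
Qed.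

Definition C (m : nat) : S := (2%:R * ((n%:R)^-1 * (n%:R)^-1)) *: \sum_(i < n) w ^+ (i * m) *: Y i.

Lemma mul_bb k l : b k * b l =
  ((n%:R)^-1 * (n%:R)^-1) *: \sum_(i < n) \sum_(i' < n) (w ^+ (i * k) * w ^+ (i' * l)) *: (X i * X i').
Proof.
rewrite !bE -scalerAl -scalerAr scalerA mulr_suml; congr (_ *: _).
apply: eq_bigr => i _; rewrite -scalerAl mulr_sumr scaler_sumr; apply: eq_bigr => i' _.
by rewrite -scalerAr scalerA.
Qed.

Lemma w_add i k l : w ^+ (i * k) * w ^+ (i * l) = w ^+ (i * ((k + l) %% n)).
Proof.
rewrite -exprD -mulnDr -(prim_expr_mod hw) -[in RHS](prim_expr_mod hw).
by rewrite modnMmr.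
Qed.

Lemma anticomm k l : b k * b l + b l * b k = C ((k + l) %% n).
Proof.
rewrite !mul_bb -scalerDr; rewrite /C.
rewrite [X in _ + X](exchange_big) /= -big_split /=.
rewrite [2%:R * _]mulrC -[RHS]scalerA; congr (_ *: _).
rewrite scaler_sumr; apply: eq_bigr => i _.
rewrite -big_split /= (bigD1 i) //= big1 ?addr0.
  by rewrite /Y [w ^+ (i * l) * _]mulrC w_add -scalerDr -mulr2n -scaler_nat !scalerA mulrC.
move=> i' hi'; rewrite [w ^+ (i' * l) * _]mulrC -scalerDr.
by rewrite Xanti ?scaler0 // eq_sym.
Qed.

Lemma zsub_add (j k : 'I_n) : ((k + zsub j k) %% n)%N = j.
Proof.
rewrite /zsub /= modnDmr addnBA; last by rewrite (leq_trans (ltnW (ltn_ord k))) // leq_addl.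
rewrite addnC addnK modnDr modn_small //.
Qed.

Lemma celE (j k : 'I_n) : cel w j k = C j.
Proof. by rewrite /cel -(zsub_add j k) -anticomm. Qed.

Lemma C_central m (f : S) : C m * f = f * C m.
Proof.
rewrite /C -scalerAl -scalerAr mulr_suml mulr_sumr; congr (_ *: _).
by apply: eq_bigr => i _; rewrite -scalerAl -scalerAr Y_central.
Qed.

End Elts.


Section Homog.
Variables (K : fieldType) (n : nat).
Local Notation S := (S K n).
Local Notation mono := (mono n).

Lemma homog_mul r s (f g : S) : homog r f -> homog s g -> homog (r + s) (f * g).
Proof.
move=> hf hg a ha; rewrite evM smulE big1 // => d hd; rewrite /term.
set x := ord_to_mono d.
have hx : mle x a by rewrite -mle_otm.
have [e|ne] := eqVneq (deg x) r; last by rewrite hf ?mulr0 ?mul0r.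
rewrite hg ?mulr0 //; apply: contra ha => /eqP e2.
by rewrite -(madd_sub hx) deg_madd e e2.
Qed.

Lemma homog_add r (f g : S) : homog r f -> homog r g -> homog r (f + g).
Proof. by move=> hf hg a ha; rewrite evD hf ?hg ?addr0. Qed.

Lemma homog_scale r c (f : S) : homog r f -> homog r (c *: f).
Proof. by move=> hf a ha; rewrite evZ hf ?mulr0. Qed.

Lemma homog0 r : homog r (0 : S).
Proof. by []. Qed.

Lemma homog_sum (I : Type) r (s : seq I) (P : pred I) (F : I -> S) :
  (forall i, P i -> homog r (F i)) -> homog r (\sum_(i <- s | P i) F i).
Proof.
move=> h; elim/big_rec: _ => [|i x Pi hx]; first exact: homog0.
by apply: homog_add => //; apply: h.
Qed.

Lemma homog1 : homog 0 (1 : S).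
Proof.
move=> a ha; rewrite ev1 /sone; case: eqP => // e; move: ha; rewrite e.
by rewrite /deg big1 // => i _; rewrite ffunE.
Qed.

Lemma deg_unitm (i : 'I_n) : deg (unitm i) = 1%N.
Proof.
by rewrite /deg (bigD1 i) //= ffunE eqxx big1 // => j hj; rewrite ffunE (negbTE hj).
Qed.

Lemma homogX i : homog (n:=n) 1 (X K i).
Proof.
move=> a ha; rewrite XE /delta; case: eqP => // e.
by move: ha; rewrite e deg_unitm.
Qed.

Lemma homog_exp r k (f : S) : homog r f -> homog (k * r) (f ^+ k).
Proof.
move=> hf; elim: k => [|k IH]; first by rewrite mul0n expr0; exact: homog1.
by rewrite exprS mulSn; apply: homog_mul.
Qed.

Definition prodl (f : 'I_n -> S) (e : 'I_n -> nat) (l : seq 'I_n) : S :=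
  foldr (fun s acc => f s ^+ e s * acc) 1 l.

Lemma homog_prodl (f : 'I_n -> S) (d e : 'I_n -> nat) l :
  (forall s, homog (d s) (f s)) -> homog (\sum_(s <- l) e s * d s)%N (prodl f e l).
Proof.
move=> h; elim: l => [|s l IH] /=; first by rewrite big_nil; exact: homog1.
by rewrite big_cons; apply: homog_mul => //; apply: homog_exp.
Qed.

Lemma prodl_ext (f : 'I_n -> S) (e e' : 'I_n -> nat) l :
  {in l, forall s, e s = e' s} -> prodl f e l = prodl f e' l.
Proof.
elim: l => [|s l IH] //= h; rewrite h ?mem_head // IH // => x hx.
by apply: h; rewrite in_cons hx orbT.
Qed.

Lemma spowE (f : S) k : spow f k = f ^+ k.
Proof. by elim: k => [|k IH] //=; rewrite exprS -IH. Qed.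

Lemma oprodE (f : 'I_n -> S) (e : 'I_n -> nat) : oprod f e = prodl f e (enum 'I_n).
Proof. by rewrite /oprod /prodl; elim: (enum 'I_n) => [|s l IH] //=; rewrite -IH spowE. Qed.

Definition central (x : S) := forall y, x * y = y * x.

Lemma centralM x y : central x -> central y -> central (x * y).
Proof. by move=> hx hy z; rewrite -mulrA hy mulrA hx mulrA. Qed.

Lemma central1 : central 1.
Proof. by move=> y; rewrite mul1r mulr1. Qed.

Lemma centralX x k : central x -> central (x ^+ k).
Proof. by move=> hx; elim: k => [|k IH]; [rewrite expr0; exact: central1 | rewrite exprS; exact: centralM]. Qed.

Lemma prodl_central (f : 'I_n -> S) e l : (forall s, central (f s)) -> central (prodl f e l).
Proof.
move=> h; elim: l => [|s l IH] /=; first exact: central1.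
by apply: centralM => //; apply: centralX.
Qed.

Lemma prodl_add (f : 'I_n -> S) (e e' : 'I_n -> nat) l : (forall s, central (f s)) ->
  prodl f (fun s => e s + e' s)%N l = prodl f e l * prodl f e' l.
Proof.
move=> h; elim: l => [|s l IH] /=; first by rewrite mulr1.
rewrite IH exprD -!mulrA; congr (_ * _); rewrite !mulrA; congr (_ * _).
by rewrite (centralX _ (h s)).
Qed.

Lemma prodl_unit (f : 'I_n -> S) (m : 'I_n) l : uniq l ->
  prodl f (fun s => nat_of_bool (s == m)) l = if m \in l then f m else 1.
Proof.
elim: l => [|s l IH] //= /andP [hs hu]; rewrite IH // in_cons.
have [e|ne] := eqVneq s m.
  by rewrite /= expr1 -e (negbTE hs) mulr1.
by rewrite /= expr0 mul1r.
Qed.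

Lemma prodl0 (f : 'I_n -> S) (e : 'I_n -> nat) l : (forall s, e s = 0%N) -> prodl f e l = 1.
Proof. by move=> h; elim: l => [|s l IH] //=; rewrite h IH expr0 mulr1. Qed.

End Homog.


Section Span.
Variables (K : fieldType) (n : nat) (w : K).
Hypothesis hw : n.-primitive_root w.
Hypothesis h2 : (2%:R : K) != 0.
Local Notation S := (S K n).
Local Notation mono := (mono n).

Lemma n_gt0 : (0 < n)%N. Proof. exact: prim_order_gt0 hw. Qed.
Definition idx (k : nat) : 'I_n := Ordinal (ltn_pmod k n_gt0).

Definition Bl l (e : {ffun 'I_n -> bool}) : S := prodl (b w) (fun s => nat_of_bool (e s)) l.
Definition Cm (J : {ffun 'I_n -> nat}) : S := prodl (fun j : 'I_n => C w j) (fun s => J s) (enum 'I_n).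
Definition unitJ (m : 'I_n) : {ffun 'I_n -> nat} := [ffun s => nat_of_bool (s == m)].
Definition setE (e : {ffun 'I_n -> bool}) u v : {ffun 'I_n -> bool} :=
  [ffun x => if x == u then v else e x].

Definition Tm := (K * ({ffun 'I_n -> bool} * {ffun 'I_n -> nat}))%type.
Definition Mt l (p : Tm) : S := p.1 *: (Bl l p.2.1 * Cm p.2.2).
Definition inV l (x : S) := exists s : seq Tm, x = \sum_(p <- s) Mt l p.

Lemma C_central' (j : 'I_n) : central (C w j : S).
Proof. by move=> y; rewrite C_central. Qed.

Lemma Cm_central J : central (Cm J).
Proof. by apply: prodl_central => s; exact: C_central'. Qed.

Lemma Cm_unit m : Cm (unitJ m) = C w m.
Proof.
rewrite /Cm (@prodl_ext _ _ _ _ (fun s => nat_of_bool (s == m))); last by move=> s _; rewrite ffunE.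
by rewrite prodl_unit ?enum_uniq ?mem_enum.
Qed.

Lemma Cm_mul J J' : Cm J * Cm J' = Cm [ffun s => (J s + J' s)%N].
Proof.
rewrite /Cm [in RHS](@prodl_ext _ _ _ _ (fun s => (J s + J' s)%N)); last by move=> s _; rewrite ffunE.
by rewrite prodl_add //; exact: C_central'.
Qed.

Lemma Cm0 : Cm [ffun => 0%N] = 1.
Proof. by rewrite /Cm prodl0 // => s; rewrite ffunE. Qed.

Lemma inV0 l : inV l 0.
Proof. by exists [::]; rewrite big_nil. Qed.

Lemma inVD l x y : inV l x -> inV l y -> inV l (x + y).
Proof. by move=> [s ->] [t ->]; exists (s ++ t); rewrite big_cat. Qed.

Lemma inVZ l c x : inV l x -> inV l (c *: x).
Proof.
move=> [s ->]; exists (map (fun p : Tm => (c * p.1, p.2)) s).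
by rewrite big_map scaler_sumr; apply: eq_bigr => p _; rewrite /Mt scalerA.
Qed.

Lemma inVB l x y : inV l x -> inV l y -> inV l (x - y).
Proof. by move=> hx hy; rewrite -scaleN1r; apply: inVD => //; exact: inVZ. Qed.

Lemma inV_term l c e J : inV l (c *: (Bl l e * Cm J)).
Proof. by exists [:: (c, (e, J))]; rewrite big_seq1. Qed.

Lemma inV_sum l (I : Type) (r : seq I) (F : I -> S) :
  (forall i, inV l (F i)) -> inV l (\sum_(i <- r) F i).
Proof.
move=> h; elim: r => [|i r IH]; first by rewrite big_nil; exact: inV0.
by rewrite big_cons; apply: inVD.
Qed.

Lemma inV_mulCm l x J : inV l x -> inV l (x * Cm J).
Proof.
move=> [s ->]; rewrite mulr_suml; apply: inV_sum => p.
by rewrite /Mt -scalerAl -mulrA Cm_mul; exact: inV_term.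
Qed.

Lemma Bl_ext l (e e' : {ffun 'I_n -> bool}) : {in l, forall s, e s = e' s} -> Bl l e = Bl l e'.
Proof. by move=> h; apply: prodl_ext => s hs; rewrite h. Qed.

Lemma Bl_cons_set (u : 'I_n) (l : seq 'I_n) e (v : bool) : u \notin l ->
  Bl (u :: l) (setE e u v) = b w u ^+ v * Bl l e.
Proof.
move=> hu; rewrite /Bl /= ffunE eqxx; congr (_ * _).
apply: prodl_ext => s hs; rewrite ffunE; case: eqP => // e'.
by move: hu; rewrite -e' hs.
Qed.

Lemma Bl_cons0 (u : 'I_n) (l : seq 'I_n) e : u \notin l -> Bl (u :: l) (setE e u false) = Bl l e.
Proof. by move=> hu; rewrite Bl_cons_set // expr0 mul1r. Qed.

Lemma Bl_cons1 (u : 'I_n) (l : seq 'I_n) e : u \notin l -> Bl (u :: l) (setE e u true) = b w u * Bl l e.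
Proof. by move=> hu; rewrite Bl_cons_set // expr1. Qed.

Lemma inV_lift (u : 'I_n) (l : seq 'I_n) (x : S) (v : bool) : u \notin l -> inV l x -> inV (u :: l) (b w u ^+ v * x).
Proof.
move=> hu [s ->]; rewrite mulr_sumr; apply: inV_sum => p.
by rewrite /Mt -scalerAr mulrA -Bl_cons_set //; exact: inV_term.
Qed.

Lemma bb (u : 'I_n) : b w u * b w u = 2%:R^-1 *: C w (idx (u + u)).
Proof.
have h := anticomm hw u u.
by rewrite -h -mulr2n -scaler_nat scalerA mulVf ?scale1r.
Qed.

Lemma bsu (s u : 'I_n) : b w s * b w u = C w (idx (s + u)) - b w u * b w s.
Proof. by rewrite -(anticomm hw s u) addrK. Qed.

Lemma KL l : sorted (fun x y : 'I_n => (x < y)%N) l ->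
  forall s e, s \in l -> inV l (b w s * Bl l e).
Proof.
elim: l => [|u l IH] // hs s e hsl.
have hl : sorted (fun x y : 'I_n => (x < y)%N) l := path_sorted hs.
have hall : all (fun y : 'I_n => (u < y)%N) l.
  by apply: (order_path_min _ hs) => x y z; exact: ltn_trans.
have hu : u \notin l.
  by apply/negP => hul; have := allP hall u hul; rewrite ltnn.
have -> : Bl (u :: l) e = b w u ^+ e u * Bl l e by [].
have [esu|nsu] := eqVneq s u.
  rewrite esu; case eu: (e u).
    rewrite expr1 mulrA bb -scalerAl C_central.
    by rewrite -(Bl_cons0 e hu) -Cm_unit; exact: inV_term.
  rewrite expr0 mul1r -(Bl_cons1 e hu).
  rewrite -[X in inV _ X]scale1r -[X in inV _ (_ *: X)]mulr1 -Cm0; exact: inV_term.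
have hsl' : s \in l by move: hsl; rewrite in_cons (negbTE nsu).
case eu: (e u).
  rewrite expr1 mulrA bsu mulrBl -mulrA.
  apply: inVB; last by rewrite -[b w u]expr1; apply: (inV_lift true) => //; exact: IH.
  rewrite C_central -Cm_unit -[X in inV _ X]scale1r -(Bl_cons0 e hu).
  exact: inV_term.
rewrite expr0 mul1r -[X in inV _ X]mul1r -(expr0 (b w u)).
by apply: (inV_lift false) => //; exact: IH.
Qed.

End Span.


Section Bij.
Variables (n r : nat).
Local Notation mono := (mono n).

Definition mono_of (t : bidx n r) : mono := [ffun s => (t.1 s + 2 * t.2 s)%N].
Definition tof (a : mono) : bidx n r := ([ffun s => odd (a s)], [ffun s => inord (a s)./2]).

Lemma deg_mono_of t : deg (mono_of t) = (\sum_(s < n) nat_of_bool (t.1 s) + 2 * \sum_(s < n) nat_of_ord (t.2 s))%N.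
Proof.
rewrite /deg big_distrr /= -big_split; apply: eq_bigr => s _; by rewrite ffunE.
Qed.

Lemma bvalidE t : bvalid t = (deg (mono_of t) == r).
Proof. by rewrite /bvalid deg_mono_of. Qed.

Lemma tofK t : tof (mono_of t) = t.
Proof.
case: t => e J; rewrite /tof /=; congr (_, _); apply/ffunP => s; rewrite !ffunE.
  by rewrite oddD oddM /= addbF; case: (e s).
by apply: val_inj; rewrite /= mul2n half_bit_double inord_val.
Qed.

Lemma mono_ofK a : deg a = r -> mono_of (tof a) = a.
Proof.
move=> ha; apply/ffunP => s; rewrite !ffunE inordK ?mul2n ?odd_double_half //.
by rewrite ltnS leq_half_double -ha (leq_trans (le_deg a s)) // -addnn leqW // leq_addr.
Qed.

Lemma tof_valid a : deg a = r -> bvalid (tof a).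
Proof. by move=> ha; rewrite bvalidE mono_ofK ?ha. Qed.

End Bij.

Section Span2.
Variables (K : fieldType) (n : nat) (w : K).
Hypothesis hw : n.-primitive_root w.
Hypothesis h2 : (2%:R : K) != 0.
Hypothesis hn : (n%:R : K) != 0.
Local Notation S := (S K n).
Local Notation mono := (mono n).
Local Notation E := (enum 'I_n).

Lemma sorted_enum : sorted (fun x y : 'I_n => (x < y)%N) E.
Proof. by have := iota_ltn_sorted 0 n; rewrite -val_enum_ord sorted_map. Qed.

Lemma inV_b s (x : S) : inV w E x -> inV w E (b w s * x).
Proof.
move=> [l ->]; rewrite mulr_sumr; apply: inV_sum => p.
rewrite /Mt -scalerAr mulrA; apply: inVZ; apply: inV_mulCm.
by apply: KL => //; [exact: sorted_enum | rewrite mem_enum].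
Qed.

Lemma w_neq0 : w != 0.
Proof.
apply/eqP => w0; have := prim_expr_order hw; rewrite w0 expr0n.
by case: n (prim_order_gt0 hw) => // k _ /eqP; rewrite eq_sym oner_eq0.
Qed.

Lemma geo (i i' : 'I_n) :
  \sum_(g < n) (w ^+ (i * g))^-1 * w ^+ (i' * g) = if i == i' then n%:R else 0.
Proof.
have wi0 : w ^+ i != 0 by rewrite expf_neq0 // w_neq0.
set z := w ^+ i' / w ^+ i.
have hz : forall g, (w ^+ (i * g))^-1 * w ^+ (i' * g) = z ^+ g.
  by move=> g; rewrite /z exprMn exprVn -!exprM mulrC.
under eq_bigr do rewrite hz.
have [e|ne] := eqVneq i i'.
  rewrite /z -e divff // (eq_bigr (fun _ => 1)) => [|g _]; last by rewrite expr1n.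
  by rewrite sumr_const card_ord.
have z1 : z - 1 != 0.
  rewrite subr_eq0; apply/eqP => z1; move: ne; rewrite eq_sym => /negP; apply.
  have : w ^+ i' = w ^+ i by rewrite -(divfK wi0 (w ^+ i')) -/z z1 mul1r.
  by move/eqP; rewrite (eq_prim_root_expr hw) !modn_small.
have zn : z ^+ n = 1.
  by rewrite /z exprMn exprVn -!exprM !(mulnC _ n) !exprM (prim_expr_order hw) !expr1n invr1 mulr1.
have := subrX1 z n; rewrite zn subrr => /esym/eqP; rewrite mulf_eq0 (negbTE z1) /=.
by move/eqP.
Qed.

Lemma X_fourier i : X K i = \sum_(g < n) (w ^+ (i * g))^-1 *: b w g.
Proof.
under eq_bigr do rewrite bE scalerA [_ * n%:R^-1]mulrC -scalerA scaler_sumr.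
rewrite -scaler_sumr exchange_big /=.
under eq_bigr do (under eq_bigr do rewrite scalerA; rewrite -scaler_suml geo).
rewrite (bigD1 i) //= eqxx big1 ?addr0 ?scalerA ?mulVf ?scale1r // => j hj.
by rewrite eq_sym (negbTE hj) scale0r.
Qed.

Lemma inV_X i (x : S) : inV w E x -> inV w E (X K i * x).
Proof.
move=> hx; rewrite X_fourier mulr_suml; apply: inV_sum => g.
by rewrite -scalerAl; apply: inVZ; apply: inV_b.
Qed.

Lemma mle_unitm (a : mono) i : (0 < a i)%N -> mle (unitm i) a.
Proof. by move=> h; apply/mleP => j; rewrite ffunE; case: eqP => [->|]. Qed.

Lemma delta_in_k k (a : mono) : deg a = k -> inV w E (delta a : S).
Proof.
elim: k a => [|k IH] a ha.
  have -> : a = mzero n.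
    by apply/ffunP => s; rewrite ffunE; apply/eqP; rewrite -leqn0 -ha le_deg.
  rewrite -(sone_delta K n).
  have -> : (@sone K n : S) = 1 *: (Bl w E [ffun => false] * Cm w [ffun => 0%N]).
    by rewrite Cm0 /Bl prodl0 ?mulr1 ?scale1r // => s; rewrite ffunE.
  exact: inV_term.
have [i hi] : exists i, (0 < a i)%N.
  case: (pickP (fun i => (0 < a i)%N)) => [i hi|h]; first by exists i.
  by move: ha; rewrite /deg big1 // => s _; move: (h s) => /=; case: (a s).
set a' := mono_sub a (unitm i).
have ea : madd (unitm i) a' = a by rewrite madd_sub // mle_unitm.
have da : deg a' = k by apply/eqP; rewrite -eqSS -ha -ea deg_madd deg_unitm.
have -> : (delta a : S) = (-1) ^+ sgn_exp (unitm i) a' *: (X K i * delta a').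
  apply: functional_extensionality => x.
  by rewrite evZ evM XE delta_mul mulrA -exprD sign_double mul1r ea.
by apply: inVZ; apply: inV_X; apply: IH.
Qed.

Lemma delta_in (a : mono) : inV w E (delta a : S).
Proof. exact: (@delta_in_k (deg a)). Qed.

Lemma inV_sumc (I : Type) (rr : seq I) (P : pred I) (F : I -> S) :
  (forall i, P i -> inV w E (F i)) -> inV w E (\sum_(i <- rr | P i) F i).
Proof. by move=> h; apply: big_ind => //; [exact: inV0 | move=> x y; exact: inVD]. Qed.

Lemma homog_expand r (f : S) : homog r f ->
  f = \sum_(t : bidx n r | bvalid t) f (mono_of t) *: (delta (mono_of t) : S).
Proof.
move=> hf; apply: functional_extensionality => a; rewrite evsum.
have [da|nda] := eqVneq (deg a) r.
  rewrite (bigD1 (tof r a)) /=; last exact: tof_valid.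
  rewrite evZ mono_ofK // /delta eqxx mulr1 big1 ?addr0 // => t /andP [ht ne].
  rewrite evZ /delta; case: eqP => [e|]; last by rewrite mulr0.
  by move: ne; rewrite e tofK eqxx.
rewrite hf // big1 // => t ht; rewrite evZ /delta; case: eqP => [e|]; last by rewrite mulr0.
have dt : deg (mono_of t) = r by apply/eqP; rewrite -bvalidE.
by move: nda; rewrite e dt eqxx.
Qed.

Lemma homog_in r (f : S) : homog r f -> inV w E f.
Proof.
move=> hf; rewrite (homog_expand hf); apply: inV_sumc => t _.
by apply: inVZ; exact: delta_in.
Qed.

End Span2.


Lemma surj_inj (K : fieldType) (N : nat) (M : 'M[K]_N) :
  (forall v : 'rV_N, exists u, u *m M = v) -> forall u : 'rV_N, u *m M = 0 -> u = 0.
Proof.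
move=> hs u hu.
have [U hU] : exists U : 'I_N -> 'rV_N, forall i, U i *m M = row i 1%:M.
  by apply: (@fin_all_exists _ (fun _ => 'rV[K]_N) (fun i u => u *m M = row i 1%:M)) => i; exact: hs.
have hB : (\matrix_i U i) *m M = 1%:M.
  by apply/row_matrixP => i; rewrite row_mul rowK hU.
have [_ uM] := mulmx1_unit hB.
by rewrite -[u]mulmx1 -(mulmxV uM) mulmxA hu mul0mx.
Qed.

Lemma sum_enumI n (F : 'I_n -> nat) : (\sum_(s <- enum 'I_n) F s = \sum_(s < n) F s)%N.
Proof. by rewrite big_enum /=; apply: eq_bigl => i; rewrite inE. Qed.

Section Final.
Variables (K : fieldType) (n : nat) (w : K).
Hypothesis hw : n.-primitive_root w.
Hypothesis h2 : (2%:R : K) != 0.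
Hypothesis hn : (n%:R : K) != 0.
Local Notation S := (S K n).
Local Notation mono := (mono n).
Local Notation E := (enum 'I_n).

Lemma cjE : cj w = (fun j : 'I_n => (C w j : S)).
Proof. by apply: functional_extensionality => j; rewrite /cj celE. Qed.

Lemma belt_eq r (t : bidx n r) :
  (belt w t : S) = Bl w E t.1 * Cm w [ffun s => nat_of_ord (t.2 s)].
Proof.
rewrite /belt.
have e1 : oprod (bel w) (fun s => nat_of_bool (t.1 s)) = Bl w E t.1.
  by rewrite (oprodE (b w)).
have e2 : oprod (cj w) (fun s => nat_of_ord (t.2 s)) = Cm w [ffun s => nat_of_ord (t.2 s)].
  rewrite cjE (oprodE (fun j : 'I_n => (C w j : S))) /Cm.
  by apply: prodl_ext => s _; rewrite ffunE.
by rewrite e1 e2.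
Qed.

Definition dg (e : {ffun 'I_n -> bool}) (J : {ffun 'I_n -> nat}) :=
  (\sum_(s < n) nat_of_bool (e s) + 2 * \sum_(s < n) J s)%N.

Lemma homog_BC e J : homog (dg e J) (Bl w E e * Cm w J).
Proof.
have h1 := @homog_prodl K n (b w) (fun _ => 1%N) (fun s => nat_of_bool (e s)) E.
have h2' := @homog_prodl K n (fun j : 'I_n => C w j) (fun _ => 2%N) (fun s => J s) E.
have -> : dg e J = ((\sum_(s <- E) (nat_of_bool (e s)) * 1) + \sum_(s <- E) J s * 2)%N.
  rewrite /dg !sum_enumI big_distrr /=; congr (_ + _)%N.
    by apply: eq_bigr => s _; rewrite muln1.
  by apply: eq_bigr => s _; rewrite mulnC.
apply: homog_mul; first apply: h1.
  move=> s; rewrite bE; apply: homog_scale; apply: homog_sum => i _.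
  by apply: homog_scale; exact: homogX.
apply: h2' => s; rewrite /C; apply: homog_scale; apply: homog_sum => i _.
by apply: homog_scale; rewrite /Y -[2%N]/(1 + 1)%N; apply: homog_mul; exact: homogX.
Qed.

Lemma bvalid_dg r (t : bidx n r) : bvalid t = (dg t.1 [ffun s => nat_of_ord (t.2 s)] == r).
Proof.
rewrite /bvalid /dg; congr (_ + 2 * _ == r)%N.
by apply: eq_bigr => s _; rewrite ffunE.
Qed.

Lemma homog_belt r (t : bidx n r) : bvalid t -> homog r (belt w t).
Proof.
rewrite bvalid_dg => /eqP h; rewrite (belt_eq t) -{1}h; exact: homog_BC.
Qed.

Definition tp r (p : Tm K n) : bidx n r := (p.2.1, [ffun u => inord (p.2.2 u)]).

Lemma tp_ok r (p : Tm K n) : dg p.2.1 p.2.2 = r ->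
  bvalid (tp r p) /\ (belt w (tp r p) : S) = Bl w E p.2.1 * Cm w p.2.2.
Proof.
move=> hd.
have hJ : forall u, (p.2.2 u <= r)%N.
  move=> u; rewrite -hd /dg (leq_trans _ (leq_addl _ _)) // (leq_trans _ (leq_pmull _ _)) //.
  by rewrite (bigD1 u) //= leq_addr.
have eJ : [ffun s => nat_of_ord ((tp r p).2 s)] = p.2.2.
  by apply/ffunP => u; rewrite !ffunE inordK // ltnS.
by rewrite bvalid_dg belt_eq eJ hd eqxx.
Qed.

Lemma span r (f : ser K n) : homog r f ->
  exists lam : bidx n r -> K,
    forall a, f a = \sum_(t : bidx n r | bvalid t) lam t * belt w t a.
Proof.
move=> hf; have [s es] := homog_in hw h2 hn hf.
exists (fun t => \sum_(p <- s | (dg p.2.1 p.2.2 == r) && (tp r p == t)) p.1) => a.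
have [da|nda] := eqVneq (deg a) r; last first.
  rewrite hf // big1 // => t ht; rewrite homog_belt ?mulr0 //.
rewrite es evsum.
have -> : \sum_(p <- s) Mt w E p a =
    \sum_(p <- s) (if dg p.2.1 p.2.2 == r then p.1 * belt w (tp r p) a else 0).
  apply: eq_bigr => p _; rewrite /Mt evZ.
  have [hd|hd] := eqVneq (dg p.2.1 p.2.2) r.
    by rewrite (proj2 (tp_ok hd)).
  by rewrite homog_BC ?mulr0 // da eq_sym.
under [RHS]eq_bigr do rewrite mulr_suml big_mkcond /=.
rewrite exchange_big /=; apply: eq_bigr => p _.
have [hd|hd] := eqVneq (dg p.2.1 p.2.2) r.
  rewrite (bigD1 (tp r p)) /=; last exact: (proj1 (tp_ok hd)).
  rewrite eqxx big1 ?addr0 // => t /andP [_ ht].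
  by rewrite eq_sym (negbTE ht).
by rewrite big1 // => t _.
Qed.

Definition Avalid r := [pred t : bidx n r | bvalid t].

Lemma indep r (lam : bidx n r -> K) :
  (forall a, \sum_(t : bidx n r | bvalid t) lam t * belt w t a = 0) ->
  forall t : bidx n r, bvalid t -> lam t = 0.
Proof.
move=> hl t0 ht0.
pose A := Avalid r.
pose ev (i : 'I_#|A|) := enum_val i.
have evA : forall i, bvalid (ev i) by move=> i; have := enum_valP i.
pose M : 'M[K]_#|A| := \matrix_(i, j) belt w (ev i) (mono_of (ev j)).
have sumA : forall F : bidx n r -> K,
    \sum_(t : bidx n r | bvalid t) F t = \sum_(i < #|A|) F (ev i).
  by move=> F; rewrite -big_enum_val; apply: eq_bigl => t; rewrite inE.
have key : forall u : 'rV_#|A|, forall lm : bidx n r -> K,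
    (forall i, u 0 i = lm (ev i)) ->
    forall j, (u *m M) 0 j = \sum_(t : bidx n r | bvalid t) lm t * belt w t (mono_of (ev j)).
  move=> u lm hu j; rewrite !mxE sumA; apply: eq_bigr => i _.
  by rewrite hu mxE.
have surj : forall v : 'rV_#|A|, exists u, u *m M = v.
  move=> v.
  pose v' (t : bidx n r) := \sum_(i | ev i == t) v 0 i.
  have hv' : forall j, v' (ev j) = v 0 j.
    move=> j; rewrite /v' (bigD1 j) //= big1 ?addr0 // => i /andP [hi ne].
    by move: ne; rewrite (enum_val_inj (eqP hi)) eqxx.
  pose f : ser K n := fun a => if deg a == r then v' (tof r a) else 0.
  have hf : homog r f by move=> a ha; rewrite /f (negbTE ha).
  have [lm hlm] := span hf.
  exists (\row_i lm (ev i)); apply/rowP => j.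
  rewrite (key _ lm) => [|i]; last by rewrite mxE.
  have dj : deg (mono_of (ev j)) = r by apply/eqP; rewrite -bvalidE.
  by rewrite -hlm /f dj eqxx tofK hv'.
have hu0 := surj_inj surj (u := \row_i lam (ev i)).
have : \row_i lam (ev i) = 0.
  apply: hu0; apply/rowP => j; rewrite (key _ lam) => [|i]; last by rewrite mxE.
  by rewrite hl mxE.
move/rowP => /(_ (enum_rank_in ht0 t0)); rewrite !mxE /ev enum_rankK_in //.
Qed.

End Final.

Theorem proposition1p2 (K : closedFieldType) (hK : [pchar K] =i pred0)
  (n : nat) (hn : (2 <= n)%N) (w : K) (hw : n.-primitive_root w) :
  (* c_j is independent of k *)
  (forall j k k' : 'I_n, cel w j k =1 cel w j k') /\
  (* c_j is central in A *)
  (forall (j : 'I_n) (f : ser K n), is_elt f ->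
     smul (cj w j) f =1 smul f (cj w j)) /\
  (* B_r is a K-basis of A_r *)
  (forall r : nat,
     (forall t : bidx n r, bvalid t -> homog r (belt w t)) /\
     (forall f : ser K n, homog r f ->
        exists lam : bidx n r -> K,
          forall a, f a = \sum_(t : bidx n r | bvalid t) lam t * belt w t a) /\
     (forall lam : bidx n r -> K,
        (forall a, \sum_(t : bidx n r | bvalid t) lam t * belt w t a = 0) ->
        forall t : bidx n r, bvalid t -> lam t = 0)).
Proof.
have hc := (pcharf0P K).1 hK.
have h2 : (2%:R : K) != 0 by rewrite hc.
have hn' : (n%:R : K) != 0 by rewrite hc -lt0n (leq_trans _ hn).
split; [|split].
- by move=> j k k' a; rewrite (celE hw j k) (celE hw j k').
- move=> j f _ a.
  change (((cj w j : S K n) * (f : S K n)) a = ((f : S K n) * (cj w j : S K n)) a).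
  by rewrite /cj (celE hw j j) C_central.
- move=> r; split; [|split].
  + by move=> t ht; exact: homog_belt ht.
  + by move=> f hf; exact: span hf.
  + by move=> lam hl t ht; exact: (indep hw h2 hn' hl ht).
Qed.
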